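(* Let $\kappa \le \mathfrak{c}$ be a cardinal with $\mathrm{cf}(\kappa) > \omega$, let $\mathcal{A}$ and $\mathcal{B}$ be almost disjoint families on $\omega$ of size $\kappa$, and let $h : \mathcal{A} \to \mathcal{B}$ be a bijection. If the sets $A = \{|x \cap y| : x, y \in \mathcal{A},\ x \neq y\}$ and $B = \{|x \cap y| : x, y \in \mathcal{B},\ x \neq y\}$ are almost oscillating, then there is $\mathcal{A}' \subseteq \mathcal{A}$ with $|\mathcal{A}'| = \kappa$ such that the restriction $h \restriction \mathcal{A}' : \mathcal{A}' \to h[\mathcal{A}']$ is of dense oscillation.
   Context: An almost disjoint (AD) family on $\omega$ is a family of infinite subsets of $\omega$ any two distinct members of which have finite intersection. Two sets $A, B \subseteq \omega$ are oscillating if for every two-element set $\{x, y\} \subseteq A$ and every two-element set $\{w, z\} \subseteq B$ we have $|y - x| \neq |z - w|$; they are almost oscillating if there is $n \in \omega$ such that $A \setminus n$ and $B \setminus n$ are oscillating. For AD families $\mathcal{C}, \mathcal{D}$ of size $\kappa$, a bijection $g : \mathcal{C} \to \mathcal{D}$ is of dense oscillation if for every $\mathcal{C}' \subseteq \mathcal{C}$ with $|\mathcal{C}'| = \kappa$ there are $x, y, z \in \mathcal{C}'$ such that $|(x \cap z) \setminus (x \cap y)| \neq |(g(x) \cap g(z)) \setminus (g(x) \cap g(y))|$. *)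

(* Defs.v *)
From mathcomp Require Import all_boot.
From mathcomp Require Import boolp classical_sets functions cardinality.
Set Implicit Arguments. Unset Strict Implicit. Unset Printing Implicit Defensive.
Local Open Scope classical_set_scope.
Local Open Scope card_scope.

Definition AD_family (F : set (set nat)) : Prop :=
  (forall x, F x -> infinite_set x) /\
  (forall x y, F x -> F y -> x <> y -> finite_set (x `&` y)).

(* { |x cap y| : x, y in F, x <> y } (the intersections are finite in an AD family) *)
Definition intersection_sizes (F : set (set nat)) : set nat :=
  [set n | exists x y, [/\ F x, F y, x <> y & (x `&` y) #= `I_n]].

Definition natdist (m n : nat) : nat := (m - n) + (n - m).

Definition oscillating (A B : set nat) : Prop :=
  forall x y w z, A x -> A y -> x <> y -> B w -> B z -> w <> z ->
    natdist y x <> natdist z w.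

(* A \ n, with n = {0,...,n-1} *)
Definition almost_oscillating (A B : set nat) : Prop :=
  exists n : nat, oscillating (A `\` `I_n) (B `\` `I_n).

Definition dense_oscillation (K : Type) (C D : set (set nat))
  (g : set nat -> set nat) : Prop :=
  forall C', C' `<=` C -> C' #= [set: K] ->
    exists x y z, [/\ C' x, C' y, C' z &
      ~ (((x `&` z) `\` (x `&` y)) #= ((g x `&` g z) `\` (g x `&` g y)))].

(* kappa = |K| has uncountable cofinality: kappa is uncountable and is not
   a countable union of subsets of size < kappa *)
Definition cf_gt_omega (K : Type) : Prop :=
  ~ ([set: K] #<= [set: nat]) /\
  forall X : nat -> set K, (forall n, ~ ([set: K] #<= X n)) ->
    exists k : K, forall n, ~ X n k.

(* Main.v *)
Require Import Defs.
From mathcomp Require Import all_boot finmap.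
From mathcomp Require Import boolp classical_sets functions cardinality.
From mathcomp Require Import zify.
Local Open Scope classical_set_scope.
Local Open Scope card_scope.

Definition sz (X : set nat) : nat := #|` fset_set X|%fset.

Lemma sz_split (A B : set nat) : finite_set A -> finite_set B ->
  sz A = (sz (A `\` B) + sz (A `&` B))%N.
Proof.
move=> fA fB; rewrite /sz fset_setD // fset_setI //.
by rewrite addnC cardfsID.
Qed.

Lemma sz_card (A : set nat) : finite_set A -> A #= `I_(sz A).
Proof.
move=> fA; have [n An] := fA; by rewrite /sz (card_fset_set An).
Qed.

Lemma bounded_countable (D : set (set nat)) (m : nat) :
  (forall x, D x -> infinite_set x) ->
  (forall x y, D x -> D y -> x <> y -> finite_set (x `&` y) /\ (sz (x `&` y) <= m)%N) ->
  countable D.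
Proof.
move=> Dinf Dbd.
have hF : forall x : set nat, exists B : {fset nat},
    D x -> [set` B] `<=` x /\ (m.+1 <= #|` B|)%N%fset.
  move=> x; have [Dx|nDx] := pselect (D x); last by exists fset0.
  have [B BA Bn] := infinite_set_fset m.+1 (Dinf x Dx).
  by exists B.
have [F HF] := choice hF.
apply/countable_injP; exists (fun x => choice.pickle (F x)).
move=> x y /set_mem Dx /set_mem Dy /(pcan_inj (@choice.pickleK _)) Fxy.
apply: contrapT => nxy.
have [fxy bd] := Dbd x y Dx Dy nxy.
have [Fx Fn] := HF x Dx; have [Fy _] := HF y Dy.
have : (#|` F x| <= sz (x `&` y))%N%fset.
  rewrite /sz; apply: fsubset_leq_card; apply/fsubsetP => t tF.
  rewrite in_fset_set // inE; split; first exact: Fx.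
  by rewrite Fxy in tF; exact: Fy.
lia.
Qed.

Theorem corollary11 (K : Type) (hK : [set: K] #<= [set: set nat])
  (hcf : cf_gt_omega K)
  (calA calB : set (set nat)) (hA : AD_family calA) (hB : AD_family calB)
  (hAK : calA #= [set: K]) (hBK : calB #= [set: K])
  (h : set nat -> set nat) (hbij : set_bij calA calB h) :
  almost_oscillating (intersection_sizes calA) (intersection_sizes calB) ->
  exists calA', [/\ calA' `<=` calA, calA' #= [set: K] &
    set_bij calA' (h @` calA') h /\ dense_oscillation K calA' (h @` calA') h].
Proof.
move=> [N osc].
have hinj := set_bij_inj hbij.
have hhom := set_bij_homo hbij.
exists calA; split => //; split; first exact: inj_bij.
move=> C' C'A C'K.
apply: contrapT => Hn.
have Hall : forall x y z, C' x -> C' y -> C' z ->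
    ((x `&` z) `\` (x `&` y)) #= ((h x `&` h z) `\` (h x `&` h y)).
  move=> x y z Cx Cy Cz; apply: contrapT => ne; apply: Hn.
  by exists x, y, z; split.
have finA : forall x y, calA x -> calA y -> x <> y -> finite_set (x `&` y).
  by move=> x y ax ay; apply: hA.2.
have finB : forall x y, calA x -> calA y -> x <> y -> finite_set (h x `&` h y).
  move=> x y ax ay nxy; apply: hB.2; [exact: hhom|exact: hhom|].
  by move=> e; apply: nxy; apply: hinj => //; rewrite inE.
have key : forall x y z, C' x -> C' y -> C' z -> x <> y -> x <> z ->
    (sz (x `&` y) + sz (h x `&` h z) = sz (x `&` z) + sz (h x `&` h y))%N.
  move=> x y z Cx Cy Cz nxy nxz.
  have ax := C'A _ Cx; have ay := C'A _ Cy; have az := C'A _ Cz.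
  have e1 := @sz_split _ _ (finA _ _ ax az nxz) (finA _ _ ax ay nxy).
  have e2 := @sz_split _ _ (finA _ _ ax ay nxy) (finA _ _ ax az nxz).
  have e3 := @sz_split _ _ (finB _ _ ax az nxz) (finB _ _ ax ay nxy).
  have e4 := @sz_split _ _ (finB _ _ ax ay nxy) (finB _ _ ax az nxz).
  have s1 : sz ((x `&` z) `\` (x `&` y)) = sz ((h x `&` h z) `\` (h x `&` h y)).
    exact/(fcard_eq (@finite_setD _ _ _ (finA _ _ ax az nxz)) (@finite_setD _ _ _ (finB _ _ ax az nxz)))/Hall.
  have s2 : sz ((x `&` y) `\` (x `&` z)) = sz ((h x `&` h y) `\` (h x `&` h z)).
    exact/(fcard_eq (@finite_setD _ _ _ (finA _ _ ax ay nxy)) (@finite_setD _ _ _ (finB _ _ ax ay nxy)))/Hall.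
  rewrite [(x `&` y) `&` _]setIC [(h x `&` h y) `&` _]setIC in e2 e4.
  lia.
have [x [Cx unb]] : exists x, C' x /\ forall m, exists y, [/\ C' y, y <> x & (m < sz (x `&` y))%N].
  apply: contrapT => nex.
  have bnd : forall x, C' x -> exists m, forall y, C' y -> y <> x -> (sz (x `&` y) <= m)%N.
    move=> x Cx; apply: contrapT => nb; apply: nex; exists x; split => // m.
    apply: contrapT => nm; apply: nb; exists m => y Cy nyx.
    rewrite leqNgt; apply/negP => lt; apply: nm; by exists y.
  pose X m := [set x | C' x /\ forall y, C' y -> y <> x -> (sz (x `&` y) <= m)%N].
  have cC : countable C'.
    have -> : C' = \bigcup_(m in [set: nat]) X m.
      apply/seteqP; split => [x Cx|x [m _ [Cx _]] //].
      by have [m Hm] := bnd x Cx; exists m => //; split.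
    apply: bigcup_countable => // m _.
    apply: (@bounded_countable _ m).
      by move=> x [Cx _]; apply: hA.1; apply: C'A.
    move=> x y [Cx Hx] [Cy Hy] nxy; split; first by apply: finA => //; apply: C'A.
    by rewrite setIC; apply: Hy => //; move=> e; apply: nxy.
  apply: hcf.1; apply: card_le_trans cC.
  by move: (card_esym C'K); rewrite card_eq_le => /andP[].
have [y0 [Cy0 ny0 _]] := unb 0%N.
have [y [Cy nyx lty]] := unb (N + sz (x `&` y0))%N.
have [z [Cz nzx ltz]] := unb (sz (x `&` y)).
have k1 := key x y0 y Cx Cy0 Cy (nesym ny0) (nesym nyx).
have k2 := key x y0 z Cx Cy0 Cz (nesym ny0) (nesym nzx).
have k3 := key x y z Cx Cy Cz (nesym nyx) (nesym nzx).
have ax := C'A _ Cx; have ay := C'A _ Cy; have az := C'A _ Cz.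
have nyz : y <> z by move=> e; rewrite e in ltz; lia.
have inA : forall u, C' u -> u <> x -> (N <= sz (x `&` u))%N ->
    (intersection_sizes calA `\` `I_N) (sz (x `&` u)).
  move=> u Cu nux le; split; last by move=> /=; lia.
  exists x, u; split => //; [exact: C'A | exact: nesym |].
  by apply: sz_card; apply: finA => //; [exact: C'A | exact: nesym].
have inB : forall u, C' u -> u <> x -> (N <= sz (h x `&` h u))%N ->
    (intersection_sizes calB `\` `I_N) (sz (h x `&` h u)).
  move=> u Cu nux le; split; last by move=> /=; lia.
  exists (h x), (h u); split => //; [exact: hhom | exact/hhom/C'A | |].
    by move=> /hinj e; apply: nux; symmetry; apply: e; rewrite inE //; exact: C'A.
  by apply: sz_card; apply: finB => //; [exact: C'A | exact: nesym].
apply: (osc (sz (x `&` y)) (sz (x `&` z)) (sz (h x `&` h y)) (sz (h x `&` h z))).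
- by apply: inA => //; lia.
- by apply: inA => //; lia.
- lia.
- by apply: inB => //; lia.
- by apply: inB => //; lia.
- lia.
- rewrite /natdist; lia.
Qed.
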